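(* Let $(K,v)$ be a valued field whose value group $\Gamma$ is dense and regular. If $(K,v)$ is extremal, then $\Gamma$ is divisible.
   Context: $(K,v)$ with valuation ring $\mathcal{O}_v$ and value group $\Gamma$ (and $v(0)=\infty$) is extremal if for every $n\ge1$ and every $F\in K[X_1,\dots,X_n]$ the set $\{v(F(a_1,\dots,a_n)) : a_i\in\mathcal{O}_v\}\subseteq\Gamma\cup\{\infty\}$ has a maximal element. An ordered group is dense if between any two distinct elements there is a third; it is regular if for every $n\ge1$ every open interval containing at least $n$ elements contains an $n$-divisible element. *)

(* Defs.v *)
From HB Require Import structures.
From mathcomp Require Import all_boot all_order all_algebra.
Set Implicit Arguments. Unset Strict Implicit. Unset Printing Implicit Defensive.
Import GRing.Theory.
Local Open Scope ring_scope.

Definition ordered_abelian_group (G : zmodType) (le : rel G) : Prop :=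
  [/\ reflexive le, antisymmetric le, transitive le, total le &
      forall x y z : G, le x y -> le (x + z) (y + z)].

Definition ltg (G : zmodType) (le : rel G) (x y : G) : bool := le x y && (x != y).

Definition dense_group (G : zmodType) (le : rel G) : Prop :=
  forall x y : G, ltg le x y -> exists z, ltg le x z && ltg le z y.

Definition regular_group (G : zmodType) (le : rel G) : Prop :=
  forall (n : nat) (a b : G), (0 < n)%N ->
    (exists s : seq G, [/\ uniq s, (n <= size s)%N &
                           all (fun z => ltg le a z && ltg le z b) s]) ->
    exists z w : G, [/\ ltg le a z, ltg le z b & z = w *+ n].

Definition divisible_group (G : zmodType) : Prop :=
  forall (n : nat) (g : G), (0 < n)%N -> exists h : G, h *+ n = g.

(* ---------- Gamma u {oo}, with oo represented by None ---------- *)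
Definition leo (G : zmodType) (le : rel G) (a b : option G) : bool :=
  match b with
  | None => true
  | Some y => match a with None => false | Some x => le x y end
  end.

Definition addo (G : zmodType) (a b : option G) : option G :=
  match a, b with Some x, Some y => Some (x + y) | _, _ => None end.

Definition is_valuation (K : fieldType) (G : zmodType) (le : rel G)
    (v : K -> option G) : Prop :=
  [/\ forall x : K, v x = None <-> x = 0,
      forall x y : K, v (x * y) = addo (v x) (v y),
      forall x y : K, leo le (v x) (v (x + y)) || leo le (v y) (v (x + y)) &
      forall g : G, exists x : K, v x = Some g].

Definition in_valring (K : fieldType) (G : zmodType) (le : rel G)
    (v : K -> option G) (x : K) : Prop := leo le (Some 0) (v x).

(* Formal polynomial expressions over K in the variables X_0..X_{n-1};
   they denote exactly the elements of K[X_1,...,X_n]. *)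
Inductive mpterm (K : Type) (n : nat) : Type :=
| MPVar of 'I_n
| MPConst of K
| MPAdd of mpterm K n & mpterm K n
| MPMul of mpterm K n & mpterm K n.

Fixpoint mpeval (K : fieldType) (n : nat) (a : 'I_n -> K) (F : mpterm K n) : K :=
  match F with
  | MPVar i => a i
  | MPConst c => c
  | MPAdd F1 F2 => mpeval a F1 + mpeval a F2
  | MPMul F1 F2 => mpeval a F1 * mpeval a F2
  end.

Definition extremal (K : fieldType) (G : zmodType) (le : rel G)
    (v : K -> option G) : Prop :=
  forall (n : nat) (F : mpterm K n), (0 < n)%N ->
    exists a : 'I_n -> K,
      (forall i, in_valring le v (a i)) /\
      forall b : 'I_n -> K, (forall i, in_valring le v (b i)) ->
        leo le (v (mpeval b F)) (v (mpeval a F)).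

(* Main.v *)
Require Import Defs.
From mathcomp Require Import all_boot all_order all_algebra.
From Stdlib Require Import Classical.
Set Implicit Arguments. Unset Strict Implicit. Unset Printing Implicit Defensive.
Import GRing.Theory.
Local Open Scope ring_scope.

Section OG.
Variable (G : zmodType) (le : rel G).
Hypothesis H : ordered_abelian_group le.
Local Notation lt := (ltg le).

Lemma le_refl x : le x x. Proof. by case: H => r. Qed.
Lemma le_trans' y x z : le x y -> le y z -> le x z.
Proof. by case: H => _ _ t _ _; move=> ??; apply: (t y). Qed.
Lemma le_anti x y : le x y -> le y x -> x = y.
Proof. by case: H => _ a _ _ _ ??; apply: a; apply/andP. Qed.
Lemma le_total x y : le x y || le y x.
Proof. by case: H => _ _ _ t _. Qed.
Lemma le_addr x y z : le x y -> le (x + z) (y + z).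
Proof. by case: H => _ _ _ _ t; apply: t. Qed.
Lemma le_addl x y z : le x y -> le (z + x) (z + y).
Proof. by rewrite ![z + _]addrC; apply: le_addr. Qed.
Lemma le_addr_inv x y z : le (x + z) (y + z) -> le x y.
Proof. by move/(le_addr (- z)); rewrite !addrK. Qed.
Lemma le_add a b c d : le a b -> le c d -> le (a + c) (b + d).
Proof. move=> h1 h2; apply: (le_trans' (y:=b + c)); [exact: le_addr|exact: le_addl]. Qed.
Lemma ltW x y : lt x y -> le x y. Proof. by case/andP. Qed.
Lemma lt_neq x y : lt x y -> x != y. Proof. by case/andP. Qed.
Lemma lt_nle x y : lt x y -> ~~ le y x.
Proof. case/andP=> h1 h2; apply/negP=> h3; move: h2; by rewrite (le_anti h1 h3) eqxx. Qed.
Lemma nle_lt x y : ~~ le x y -> lt y x.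
Proof.
move=> h; have := le_total x y; rewrite (negbTE h) /= => h2.
rewrite /ltg h2 /=; apply/eqP=> e; move: h; by rewrite e le_refl.
Qed.
Lemma le_neq_lt x y : le x y -> x != y -> lt x y. Proof. by move=> ??; apply/andP. Qed.
Lemma lt_le_trans y x z : lt x y -> le y z -> lt x z.
Proof.
move=> h1 h2; apply: le_neq_lt; first exact: (le_trans' (y:=y)) (ltW h1) h2.
apply/eqP=> e; subst z; move: (lt_nle h1); by rewrite h2.
Qed.
Lemma le_lt_trans y x z : le x y -> lt y z -> lt x z.
Proof.
move=> h1 h2; apply: le_neq_lt; first exact: (le_trans' (y:=y)) h1 (ltW h2).
apply/eqP=> e; subst z; move: (lt_nle h2); by rewrite h1.
Qed.
Lemma lt_addr x y z : lt x y -> lt (x + z) (y + z).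
Proof.
move=> h; apply: le_neq_lt; first exact: le_addr (ltW h).
by rewrite (inj_eq (addIr z)) lt_neq.
Qed.
Lemma lt_addl x y z : lt x y -> lt (z + x) (z + y).
Proof. by rewrite ![z + _]addrC; apply: lt_addr. Qed.
Lemma lt_le_add a b c d : lt a b -> le c d -> lt (a + c) (b + d).
Proof. move=> h1 h2; apply: (lt_le_trans (y:=b + c)); [exact: lt_addr|exact: le_addl]. Qed.
Lemma le_muln x y k : le x y -> le (x *+ k) (y *+ k).
Proof. move=> h; elim: k => [|k IH]; first by rewrite !mulr0n le_refl.
by rewrite !mulrS; apply: le_add. Qed.
Lemma lt_muln x y k : lt x y -> lt (x *+ k.+1) (y *+ k.+1).
Proof. move=> h; rewrite !mulrS; apply: lt_le_add => //; exact: le_muln (ltW h). Qed.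
Lemma le_muln_inv x y k : le (x *+ k.+1) (y *+ k.+1) -> le x y.
Proof.
move=> h; apply/negPn/negP=> /nle_lt /(lt_muln k) /lt_nle; by rewrite h.
Qed.
Lemma lt_muln_inv x y k : lt (x *+ k.+1) (y *+ k.+1) -> lt x y.
Proof.
move=> h; apply: le_neq_lt; first by apply: (le_muln_inv (ltW h)).
apply/eqP=> e; subst; by move: (lt_neq h); rewrite eqxx.
Qed.
Lemma muln_inj (x y : G) k : x *+ k.+1 = y *+ k.+1 -> x = y.
Proof. move=> e; apply: le_anti; apply: (le_muln_inv (k:=k)); rewrite e le_refl //. Qed.
Lemma le_mulnk x k m : le 0 x -> (k <= m)%N -> le (x *+ k) (x *+ m).
Proof.
move=> h km; rewrite -(subnKC km) mulrnDr -{1}(addr0 (x *+ k)); apply: le_addl.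
by rewrite -(mul0rn G (m - k)); apply: le_muln.
Qed.
End OG.
Section OG2.
Variable (G : zmodType) (le : rel G).
Hypothesis H : ordered_abelian_group le.
Local Notation lt := (ltg le).
Lemma lt_addr_inv x y z : lt (x + z) (y + z) -> lt x y.
Proof. by move/(lt_addr H (- z)); rewrite !addrK. Qed.
Lemma lt_trans' y x z : lt x y -> lt y z -> lt x z.
Proof. move=> h1 h2; exact: (lt_le_trans H (y:=y)) h1 (ltW h2). Qed.
End OG2.
Section Val.
Variable (K : fieldType) (G : zmodType) (le : rel G) (v : K -> option G).
Hypothesis H : ordered_abelian_group le.
Hypothesis V : is_valuation le v.
Local Notation lt := (ltg le).

Lemma v0 : v 0 = None. Proof. by case: V => h _ _ _; apply: (proj2 (h 0)). Qed.
Lemma vNone x : v x = None -> x = 0. Proof. by case: V => h _ _ _; apply: (proj1 (h x)). Qed.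
Lemma vSome x : x != 0 -> exists a, v x = Some a.
Proof. move=> nz; case e: (v x) => [a|]; first by exists a. by move: nz; rewrite (vNone e) eqxx. Qed.
Lemma vM x y : v (x * y) = addo (v x) (v y). Proof. by case: V => _ h _ _. Qed.
Lemma ultra x y : leo le (v x) (v (x + y)) || leo le (v y) (v (x + y)).
Proof. by case: V => _ _ h _. Qed.
Lemma v1 : v 1 = Some 0.
Proof.
have [a ea] := vSome (oner_neq0 K).
have := vM 1 1; rewrite mulr1 ea /= => [[e]].
by congr Some; apply: (addrI a); rewrite -e addr0.
Qed.
Lemma vN1 : v (-1) = Some 0.
Proof.
have [a ea] : exists a, v (-1) = Some a by apply: vSome; rewrite oppr_eq0 oner_neq0.
have := vM (-1) (-1); rewrite mulrNN mulr1 v1 ea /= => [[e]].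
congr Some; apply: (muln_inj H (k:=1)); by rewrite mulr2n -e mul0rn.
Qed.
Lemma vN x : v (- x) = v x.
Proof. by rewrite -mulN1r vM vN1; case: (v x) => //= a; rewrite add0r. Qed.
Lemma vX x a k : v x = Some a -> v (x ^+ k) = Some (a *+ k).
Proof.
move=> ea; elim: k => [|k IH]; first by rewrite expr0 v1 mulr0n.
by rewrite exprS vM ea IH /= mulrS.
Qed.
Lemma vsum_lt x y p q : v x = Some p -> v y = Some q -> lt p q -> v (x + y) = Some p.
Proof.
move=> ex ey pq.
have := ultra (x + y) (- y); rewrite addrK vN ey ex /=.
rewrite (negbTE (lt_nle H pq)) orbF.
case e: (v (x + y)) => [r|] //= rp.
have := ultra x y; rewrite ex ey e /= => /orP [pr|qr].
  by rewrite (le_anti H rp pr).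
by move: (lt_nle H (lt_le_trans H pq qr)); rewrite rp.
Qed.
Lemma vsum2 x y p q : v x = Some p -> v y = Some q -> p != q ->
  exists r, [/\ v (x + y) = Some r, le r p, le r q & (r = p \/ r = q)].
Proof.
move=> ex ey pq; case/orP: (le_total H p q) => h.
  exists p; split; [|exact: le_refl|exact: h|by left].
  by apply: vsum_lt ex ey _; apply/andP.
exists q; split; [|exact: h|exact: le_refl|by right].
by rewrite addrC; apply: vsum_lt ey ex _; apply/andP; rewrite eq_sym.
Qed.
End Val.
Fixpoint mppow (K : fieldType) (n : nat) (t : mpterm K n) (k : nat) : mpterm K n :=
  if k is k'.+1 then MPMul t (mppow t k') else @MPConst K n 1.
Lemma mpeval_pow (K : fieldType) (n : nat) (a : 'I_n -> K) t k :
  mpeval a (mppow t k) = mpeval a t ^+ k.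
Proof. by elim: k => //= k IH; rewrite IH exprS. Qed.

Section Chain.
Variable (G : zmodType) (le : rel G).
Hypothesis H : ordered_abelian_group le.
Hypothesis Dn : dense_group le.
Local Notation lt := (ltg le).
Lemma chain L U : lt L U -> forall k, exists s : seq G,
  [/\ uniq s, (k <= size s)%N & all (fun z => lt L z && lt z U) s].
Proof.
move=> LU k.
suff [m [s [Lm mU us ss als]]] : exists m s, [/\ lt L m, lt m U, uniq s, size s = k &
   all (fun z => lt m z && lt z U) s].
  exists s; split=> //; first by rewrite ss.
  apply/allP=> z zs; have /andP[h1 h2] := allP als z zs.
  by rewrite h2 andbT; apply: (lt_trans' H) Lm h1.
elim: k => [|k [m [s [Lm mU us ss als]]]].
  have [m /andP[h1 h2]] := Dn LU.
  by exists m, [::].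
have [m' /andP[h1 h2]] := Dn Lm.
exists m', (m :: s); split=> //=.
- exact: (lt_trans' H) h2 mU.
- rewrite us andbT; apply/negP=> ms; have /andP[h3 _] := allP als m ms.
  by move: (lt_neq h3); rewrite eqxx.
- by rewrite ss.
- rewrite h2 mU /=; apply/allP=> z zs; have /andP[h3 h4] := allP als z zs.
  by rewrite h4 andbT; apply: (lt_trans' H) h2 h3.
Qed.
End Chain.

Section Main.
Variable (K : fieldType) (G : zmodType) (le : rel G) (v : K -> option G).
Hypothesis H : ordered_abelian_group le.
Hypothesis V : is_valuation le v.
Local Notation lt := (ltg le).
Variable (n : nat) (g : G).
Hypothesis n0 : (0 < n)%N.
Hypothesis g0 : lt 0 g.
Hypothesis nd : forall h : G, g != h *+ n.
Let N := (2 * n)%N.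
Lemma N2 : (2 <= N)%N. Proof. by rewrite /N -[X in (X <= _)%N](muln1 2) leq_mul2l. Qed.
Lemma N0 : (0 < N)%N. Proof. by apply: leq_trans N2. Qed.
Lemma nd1 x : g != x *+ N.
Proof. by rewrite /N mulrnA; apply: nd. Qed.
Lemma nd2 x : g *+ 2 != x *+ N.
Proof.
apply/eqP; rewrite /N mulnC mulrnA => /(muln_inj H (k:=1)) /eqP.
by rewrite (negbTE (nd _)).
Qed.
Let eps := g *+ 2 + (- (g *+ 2)) *+ N.
Lemma cAB r a : eps + r *+ N != a *+ N.
Proof.
apply/eqP; rewrite /eps -addrA -mulrnDl => e.
have : g *+ 2 = (a - (- (g *+ 2) + r)) *+ N by rewrite mulrnBl -e addrK.
by move/eqP; rewrite (negbTE (nd2 _)).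
Qed.
Lemma cAC r b : eps + r *+ N != g + b *+ N.
Proof.
apply/eqP; rewrite /eps -addrA -mulrnDl mulr2n -addrA => /addrI e.
have : g = (b - (- (g *+ 2) + r)) *+ N by rewrite mulrnBl -e addrK.
by move/eqP; rewrite (negbTE (nd1 _)).
Qed.
Lemma cBC a b : a *+ N != g + b *+ N.
Proof.
apply/eqP => e.
have : g = (a - b) *+ N by rewrite mulrnBl e addrK.
by move/eqP; rewrite (negbTE (nd1 _)).
Qed.

Variable (d e : K).
Hypothesis vd : v d = Some g.
Hypothesis ve : v e = Some eps.
Let U := g *+ N.+1.
Definition Fv (a b : K) := e * (a * b - d) ^+ N + (a ^+ N + d * b ^+ N).

Lemma vB a al : v a = Some al -> v (a ^+ N) = Some (al *+ N).
Proof. by move=> h; apply: (vX V N h). Qed.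
Lemma vC b be : v b = Some be -> v (d * b ^+ N) = Some (g + be *+ N).
Proof. by move=> h; rewrite (vM V) vd (vX V N h). Qed.
Lemma vA a b r : v (a * b - d) = Some r -> v (e * (a * b - d) ^+ N) = Some (eps + r *+ N).
Proof. by move=> h; rewrite (vM V) ve (vX V N h). Qed.

Definition good s := (exists al, s = al *+ N) \/ (exists be, s = g + be *+ N).
Lemma good_neq s r : good s -> s != eps + r *+ N.
Proof. by case=> [[al ->]|[be ->]]; rewrite eq_sym ?cAB ?cAC. Qed.

Lemma Sval a b : a ^+ N + d * b ^+ N = 0 \/
   exists s, v (a ^+ N + d * b ^+ N) = Some s /\ good s.
Proof.
case: (eqVneq a 0) => [->|a0].
  case: (eqVneq b 0) => [->|b0].
    by left; rewrite !expr0n gtn_eqF ?N0 // mulr0 addr0.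
  right; have [be hb] := vSome V b0; exists (g + be *+ N).
  by rewrite expr0n gtn_eqF ?N0 // add0r (vC hb); split=> //; right; exists be.
have [al ha] := vSome V a0.
case: (eqVneq b 0) => [->|b0].
  right; exists (al *+ N); rewrite expr0n gtn_eqF ?N0 // mulr0 addr0 (vB ha).
  by split=> //; left; exists al.
have [be hb] := vSome V b0.
have [r [hr _ _ hor]] := vsum2 H V (vB ha) (vC hb) (cBC al be).
right; exists r; split=> //; case: hor => ->; [left; exists al|right; exists be] => //.
Qed.

Lemma Upos : lt 0 U.
Proof. by rewrite /U -(mul0rn G N.+1); apply: (lt_muln H). Qed.

Lemma tail2 a b : v (a * b - d) = Some g -> exists w, v (Fv a b) = Some w /\ lt (w *+ 2) U.
Proof.
move=> hr; have hA := vA hr.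
set t := eps + g *+ N in hA.
have t0 : le t 0.
  have h1 : le (g *+ 2 + g *+ N) (g *+ 2 *+ N).
    rewrite -mulrnDr -mulrnA; apply: (le_mulnk H) => //; first exact: ltW g0.
    by rewrite mul2n -addnn leq_add2r N2.
  have := le_addr H (- (g *+ 2 *+ N)) h1; rewrite subrr.
  by rewrite /t /eps mulNrn addrAC.
suff [w [hw wt]] : exists w, v (Fv a b) = Some w /\ le w t.
  exists w; split=> //; apply: (le_lt_trans H (y := 0)) Upos.
  rewrite -(mul0rn G 2); apply: (le_muln H); exact: (le_trans' H wt t0).
rewrite /Fv; case: (Sval a b) => [->|[s [hs gs]]].
  by exists t; rewrite addr0 hA; split=> //; apply: (le_refl H).
have neq : t != s by rewrite eq_sym; apply: good_neq.
have [r [hr' rt _ _]] := vsum2 H V hA hs neq.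
by exists r.
Qed.

Lemma tail1 a b al be : v a = Some al -> v b = Some be -> le (al + be) g ->
  exists w, v (Fv a b) = Some w /\ lt (w *+ 2) U.
Proof.
move=> ha hb hab.
have [s [hs sa sb hor]] := vsum2 H V (vB ha) (vC hb) (cBC al be).
have gs : good s by case: hor => ->; [left; exists al|right; exists be].
have sU : lt (s *+ 2) U.
  have hsum : le (al *+ N + (g + be *+ N)) U.
    by rewrite addrCA -mulrnDl /U mulrS; apply: (le_addl H); apply: (le_muln H).
  apply: (lt_le_trans H (y := al *+ N + (g + be *+ N))) hsum.
  rewrite mulr2n; case: hor => e1.
    have : lt s (g + be *+ N).
      by apply: le_neq_lt sb _; rewrite e1 cBC.
    by move=> h; rewrite -e1; apply: (lt_addl H s).
  have : lt s (al *+ N).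
    by apply: le_neq_lt sa _; rewrite e1 eq_sym cBC.
  by move=> h; rewrite -e1; apply: (lt_addr H s).
rewrite /Fv; case: (eqVneq (a * b - d) 0) => [z|nz].
  exists s; split=> //; by rewrite z expr0n gtn_eqF ?N0 // mulr0 add0r.
have [r hr] := vSome V nz.
have neq : eps + r *+ N != s by rewrite eq_sym; apply: good_neq.
have [w [hw _ ws _]] := vsum2 H V (vA hr) hs neq.
exists w; split=> //; apply: (le_lt_trans H (y := s *+ 2)) sU.
exact: (le_muln H 2 ws).
Qed.

Lemma upper a b : exists w, v (Fv a b) = Some w /\ lt (w *+ 2) U.
Proof.
case: (eqVneq a 0) => [->|a0].
  by apply: tail2; rewrite mul0r sub0r (vN H V) vd.
case: (eqVneq b 0) => [->|b0].
  by apply: tail2; rewrite mulr0 sub0r (vN H V) vd.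
have [al ha] := vSome V a0; have [be hb] := vSome V b0.
case: (boolP (le (al + be) g)) => h; first exact: tail1 ha hb h.
apply: tail2; rewrite addrC; apply: (vsum_lt H V (q := al + be)).
- by rewrite (vN H V) vd.
- by rewrite (vM V) ha hb.
- exact: (nle_lt H h).
Qed.

Hypothesis Dn : dense_group le.
Hypothesis Rg : regular_group le.
Hypothesis Ex : extremal le v.

Lemma absurd : False.
Proof.
pose X : mpterm K 2 := @MPVar K 2 ord0.
pose Y : mpterm K 2 := @MPVar K 2 (@Ordinal 2 1 isT).
pose FT := MPAdd (MPMul (@MPConst K 2 e) (mppow (MPAdd (MPMul X Y) (@MPConst K 2 (- d))) N))
   (MPAdd (mppow X N) (MPMul (@MPConst K 2 d) (mppow Y N))).
have evalF f : mpeval f FT = Fv (f ord0) (f (@Ordinal 2 1 isT)).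
  by rewrite /= !mpeval_pow.
have [as_ [asO amax]] := Ex FT (isT : (0 < 2)%N).
have [w0 [hw0 w0U]] := upper (as_ ord0) (as_ (@Ordinal 2 1 isT)).
rewrite -evalF in hw0.
pose Lo := if le (w0 *+ 2) 0 then 0 else w0 *+ 2.
have L0 : le 0 Lo.
  rewrite /Lo; case: ifP => h; first exact: (le_refl H).
  exact: (ltW (nle_lt H (negbT h))).
have Lw : le (w0 *+ 2) Lo by rewrite /Lo; case: ifP => h; rewrite ?h ?(le_refl H).
have LU : lt Lo U by rewrite /Lo; case: ifP => _ //; exact: Upos.
have [z [al [zL zU ez]]] : exists z al, [/\ lt Lo z, lt z U & z = al *+ (N * 2)].
  apply: Rg; first by rewrite muln_gt0 N0.
  exact: (chain H Dn LU (N * 2)).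
subst z.
have g0' : le 0 g := ltW g0.
have [M eM] : exists M, (N * 2)%N = M.+1.
  by exists (N * 2).-1; rewrite prednK // muln_gt0 N0.
have h1 : lt (al *+ (N * 2)) (g *+ (N * 2)).
  apply: (lt_le_trans H zU); rewrite /U; apply: (le_mulnk H g0').
  by rewrite muln2 -addnn -addn1 leq_add2l N0.
have alg : lt al g by move: h1; rewrite eM => /(lt_muln_inv H).
have al0 : lt 0 al.
  have : lt 0 (al *+ (N * 2)) by apply: (le_lt_trans H (y := Lo)).
  by rewrite eM -{1}(mul0rn G M.+1) => /(lt_muln_inv H).
have wal : lt w0 (al *+ N).
  have : lt (w0 *+ 2) (al *+ N *+ 2).
    by rewrite -mulrnA; apply: (le_lt_trans H (y := Lo)).
  exact: (lt_muln_inv H (k := 1)).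
have [a ha] : exists a, v a = Some al by case: V => _ _ _ surj; apply: surj.
have a0 : a != 0 by apply/eqP=> a0; move: ha; rewrite a0 (v0 V).
pose b := d / a.
have ab : a * b = d by rewrite /b mulrC divfK.
have [be [hb eg]] : exists be, v b = Some be /\ g = al + be.
  have := vM V a b; rewrite ab vd ha; case: (v b) => [be|] //= [e1].
  by exists be.
have be0 : le 0 be.
  apply: (le_addr_inv H (z := al)); rewrite add0r addrC -eg; exact: ltW alg.
have := amax (fun i => if val i == 0%N then a else b).
rewrite hw0 evalF /=.
have -> : Fv a b = a ^+ N + d * b ^+ N.
  by rewrite /Fv ab subrr expr0n gtn_eqF ?N0 // mulr0 add0r.
move: (ultra V (a ^+ N) (d * b ^+ N)); rewrite (vB ha) (vC hb).
case: (v (a ^+ N + d * b ^+ N)) => [u|] /=; last first.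
  move=> _ h; suff : false by []; apply: h => i; case: ifP => _; rewrite /in_valring ?ha ?hb /=;
     [exact: ltW al0|exact: be0].
move=> hor uw.
have {}uw : le u w0.
  apply: uw => i; case: ifP => _; rewrite /in_valring ?ha ?hb /=;
     [exact: ltW al0|exact: be0].
have alc : lt (al *+ N) (g + be *+ N).
  have eU : g *+ N.+1 = (g + be *+ N) + al *+ N.
    by rewrite mulrS {2}eg mulrnDl addrCA addrC.
  apply: (lt_addr_inv H (z := al *+ N)); rewrite -eU -mulr2n -mulrnA.
  exact: zU.
case/orP: hor => h.
  by move: (lt_nle H wal); rewrite (le_trans' H h uw).
by move: (lt_nle H (lt_trans' H wal alc)); rewrite (le_trans' H h uw).
Qed.
End Main.

Lemma absurd_g (K : fieldType) (G : zmodType) (le : rel G) (v : K -> option G)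
  (H : ordered_abelian_group le) (V : is_valuation le v) (Dn : dense_group le)
  (Rg : regular_group le) (Ex : extremal le v) (n : nat) (g : G) :
  (0 < n)%N -> ltg le 0 g -> (forall h : G, g != h *+ n) -> False.
Proof.
move=> n0 g0 nd.
have surj : forall x, exists y, v y = Some x by case: V.
have [d vd] := surj g.
have [e ve] := surj (g *+ 2 + (- (g *+ 2)) *+ (2 * n)).
exact: (absurd H V n0 g0 nd vd ve Dn Rg Ex).
Qed.

Theorem proposition3p4 (K : fieldType) (G : zmodType) (le : rel G)
    (v : K -> option G) :
  ordered_abelian_group le -> is_valuation le v ->
  dense_group le -> regular_group le ->
  extremal le v -> divisible_group G.
Proof.
move=> H V Dn Rg Ex n g n0.
case: (classic (exists h, h *+ n = g)) => // nh; exfalso.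
case: (eqVneq g 0) => [g0|gnz].
  by apply: nh; exists 0; rewrite mul0rn g0.
case: (boolP (le 0 g)) => hg.
  apply: (absurd_g H V Dn Rg Ex n0 (g := g)).
    by apply: le_neq_lt hg _; rewrite eq_sym.
  by move=> h; apply/eqP=> e; apply: nh; exists h.
apply: (absurd_g H V Dn Rg Ex n0 (g := - g)).
  have := lt_addr H (- g) (nle_lt H hg); by rewrite subrr add0r.
move=> h; apply/eqP=> e; apply: nh; exists (- h).
by rewrite mulNrn -e opprK.
Qed.
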